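(* Let $t=[1\ 0\ 0\ 0\ 0\ 0\ 0\ 0]$ (row vector), $u=[1\ 1\ 1\ 1\ 1\ 2\ 1\ 4]^T$ (column vector), and \[\gamma(0)=\begin{bmatrix} 0&1&0&0&0&0&0&0\\ 0&0&0&1&0&0&0&0\\ -1&1&0&1&0&0&0&0\\ 0&0&0&0&1&0&0&0\\ 0&0&0&0&0&0&1&0\\ -1&0&0&2&1&0&0&0\\ 1&-1&0&-3&3&0&1&0\\ -1&-1&0&2&3&0&1&0 \end{bmatrix},\quad \gamma(1)=\begin{bmatrix} 0&0&1&0&0&0&0&0\\ 0&0&1&0&0&0&0&0\\ 0&0&0&0&0&0&0&0\\ 0&0&0&0&0&1&0&0\\ 0&0&0&0&0&1&0&0\\ 0&0&0&0&0&0&0&0\\ 0&0&0&0&0&0&0&1\\ 0&0&0&0&0&0&0&0 \end{bmatrix},\] extended to a monoid morphism $\gamma:\{0,1\}^*\to\mathbb{Z}^{8\times 8}$ by $\gamma(w_1w_2\cdots w_m)=\gamma(w_1)\gamma(w_2)\cdots\gamma(w_m)$. Then for every $n\geq 0$, if $z=z_1\cdots z_m$ is the canonical Fibonacci representation of $n$ and $z^R=z_m\cdots z_1$ is its reversal, we have $t\,\gamma(z^R)\,u=V(n)$. In particular, $V$ is Fibonacci-regular.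
   Context: Fibonacci numbers: $F_0=0$, $F_1=1$, $F_{m+2}=F_{m+1}+F_m$. For a word $k_m\cdots k_0$ of nonnegative integer digits, $[k_m\cdots k_0]_F=\sum_{i=0}^m k_iF_{i+2}$. The canonical Fibonacci representation of $n\geq 0$ is the unique binary word $z$ with no leading zero and no two consecutive $1$s such that $[z]_F=n$ (the empty word for $n=0$). Standard Fibonacci words: $f_{-1}=b$, $f_0=a$, $f_{m+1}=f_mf_{m-1}$. The Fibonacci word ${\bf f}=\lim f_m$, with prefix of length $j$ denoted ${\bf f}(0..j]$. $V(N)$ is the number of factorizations of ${\bf f}(0..N]$ as $f_m^{k_m}\cdots f_0^{k_0}$ with all $k_i\geq 0$ (into standard words $f_i$, $i\geq0$, in non-strictly decreasing order of index), counted up to leading zero exponents; $V(0)=1$. A sequence $s$ is Fibonacci-regular if there are a row vector $v$, a column vector $w$ and a matrix-valued morphism $\rho$ on $\{0,1\}^*$ with $s([z]_F)=v\rho(z)w$ for all canonical representations $z$. *)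

(* Defs.v *)
From mathcomp Require Import all_boot all_order all_algebra.
Set Implicit Arguments. Unset Strict Implicit. Unset Printing Implicit Defensive.
Import GRing.Theory Num.Theory.

Fixpoint fib (n : nat) : nat :=
  match n with
  | 0 => 0
  | 1 => 1
  | (m.+1 as p).+1 => fib p + fib m
  end.

(* Binary words are written most significant digit first: the word
   z = k_m ... k_0 is the list [:: k_m; ...; k_0].
   [z]_F = \sum_i k_i F_{i+2}. *)
Definition fibval (z : seq bool) : nat :=
  \sum_(i < size z) nth false (rev z) i * fib i.+2.

Definition canonical_fib_rep (n : nat) (z : seq bool) : Prop :=
  [/\ head true z = true,
      (forall i, i.+1 < size z -> ~~ (nth false z i && nth false z i.+1))
    & fibval z = n].

Definition la : bool := false.
Definition lb : bool := true.

Fixpoint stdw (m : nat) : seq bool :=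
  match m with
  | 0 => [:: la]
  | 1 => [:: la; lb]
  | (k.+1 as p).+1 => stdw p ++ stdw k
  end.

(* Prefix of length N of the infinite Fibonacci word f = lim f_m.
   Since f_m is a prefix of f_{m+1} and |f_N| = F_{N+2} >= N, the prefix
   of length N of f is the prefix of length N of f_N. *)
Definition fibprefix (N : nat) : seq bool := take N (stdw N).

(* The word f_m^{k_m} ... f_0^{k_0} for ks = [:: k_0; ...; k_m]. *)
Definition facword (ks : seq nat) : seq bool :=
  flatten (rev [seq flatten (nseq (nth 0 ks i) (stdw i)) | i <- iota 0 (size ks)]).

(* A factorization of f(0..N] counted up to leading zero exponents:
   exponent sequences [:: k_0; ...; k_m] with no leading zero exponent
   (k_m <> 0, or the empty sequence). *)
Definition is_factorization (N : nat) (ks : seq nat) : Prop :=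
  (ks = [::] \/ last 0 ks <> 0) /\ facword ks = fibprefix N.

Definition V_is (N v : nat) : Prop :=
  exists s : seq (seq nat),
    [/\ uniq s, (forall ks, ks \in s <-> is_factorization N ks) & size s = v].

Local Open Scope ring_scope.

Definition mx_of (L : seq (seq int)) : 'M[int]_8 :=
  \matrix_(i < 8, j < 8) nth 0 (nth [::] L i) j.

Definition gamma0 : 'M[int]_8 := mx_of
  [:: [:: 0; 1; 0; 0; 0; 0; 0; 0];
      [:: 0; 0; 0; 1; 0; 0; 0; 0];
      [:: -1; 1; 0; 1; 0; 0; 0; 0];
      [:: 0; 0; 0; 0; 1; 0; 0; 0];
      [:: 0; 0; 0; 0; 0; 0; 1; 0];
      [:: -1; 0; 0; 2; 1; 0; 0; 0];
      [:: 1; -1; 0; -3; 3; 0; 1; 0];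
      [:: -1; -1; 0; 2; 3; 0; 1; 0]].

Definition gamma1 : 'M[int]_8 := mx_of
  [:: [:: 0; 0; 1; 0; 0; 0; 0; 0];
      [:: 0; 0; 1; 0; 0; 0; 0; 0];
      [:: 0; 0; 0; 0; 0; 0; 0; 0];
      [:: 0; 0; 0; 0; 0; 1; 0; 0];
      [:: 0; 0; 0; 0; 0; 1; 0; 0];
      [:: 0; 0; 0; 0; 0; 0; 0; 0];
      [:: 0; 0; 0; 0; 0; 0; 0; 1];
      [:: 0; 0; 0; 0; 0; 0; 0; 0]].

Definition gamma_letter (b : bool) : 'M[int]_8 := if b then gamma1 else gamma0.

Definition gamma (w : seq bool) : 'M[int]_8 :=
  foldr (fun b M => gamma_letter b *m M) 1%:M w.

Definition tvec : 'rV[int]_8 := \row_(j < 8) nth 0 [:: 1; 0; 0; 0; 0; 0; 0; 0] j.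
Definition uvec : 'cV[int]_8 := \col_(i < 8) nth 0 [:: 1; 1; 1; 1; 1; 2; 1; 4] i.

(* Main.v *)
Require Import Defs.
From mathcomp Require Import all_boot all_order all_algebra zify.
Set Implicit Arguments. Unset Strict Implicit. Unset Printing Implicit Defensive.


Notation word := (seq bool).

Definition phi1 (c : bool) : word := if c then [:: false] else [:: false; true].
Definition phi (w : word) : word := flatten (map phi1 w).

Lemma phi_cat u v : phi (u ++ v) = phi u ++ phi v.
Proof. by rewrite /phi map_cat flatten_cat. Qed.
Lemma phi_cons c u : phi (c :: u) = phi1 c ++ phi u.
Proof. by []. Qed.
Lemma phi_nil : phi [::] = [::].
Proof. by []. Qed.
Lemma phi_rcons u c : phi (rcons u c) = phi u ++ phi1 c.
Proof. by rewrite -cats1 phi_cat /phi /= cats0. Qed.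

Lemma phi_head x : ~~ head false (phi x).
Proof. by case: x => [|[] x]. Qed.

Lemma phi_inj : injective phi.
Proof.
elim=> [|c x IH] [|d y] //=.
- by case: d.
- by case: c.
rewrite !phi_cons; case: c; case: d => /=.
- by move=> [] /IH ->.
- by move=> [] hx; have := phi_head x; rewrite hx.
- by move=> [] hx; have := phi_head y; rewrite -hx.
- by move=> [] /IH ->.
Qed.

Lemma size_phi w : size (phi w) = size w + count negb w.
Proof. elim: w => [|c w IH] //=; rewrite size_cat IH; case: c => /=; lia. Qed.

Lemma stdwSS k : stdw k.+2 = stdw k.+1 ++ stdw k.
Proof. by []. Qed.

Lemma phi_stdw n : phi (stdw n) = stdw n.+1.
Proof.
elim/ltn_ind: n => [[|[|n]]] IH //.
by rewrite stdwSS phi_cat !IH // stdwSS.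
Qed.

Lemma size_stdw n : size (stdw n) = fib n.+2.
Proof.
elim/ltn_ind: n => [[|[|n]]] IH //.
by rewrite stdwSS size_cat !IH //= addnC.
Qed.

Lemma fibSS n : fib n.+2 = fib n.+1 + fib n.
Proof. by []. Qed.

Lemma fib_pos n : 0 < fib n.+1.
Proof. elim: n => [|n IH] //; rewrite fibSS; lia. Qed.

Lemma fib_ge n : n < fib n.+2.
Proof.
elim: n => [|n IH] //; rewrite fibSS; have := fib_pos n; lia.
Qed.

Lemma stdw_prefix m n : m <= n -> exists t, stdw n = stdw m ++ t.
Proof.
move=> /subnK <-; elim: (n - m) => [|k [t IH]]; first by exists [::]; rewrite cats0.
rewrite addSn; case E: (k + m) => [|j].
  by rewrite E in IH; exists (t ++ [:: true]); rewrite catA -IH.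
by rewrite E in IH; exists (t ++ stdw j); rewrite stdwSS IH catA.
Qed.

Definition Pw (w : word) : word :=
  foldl (fun p d => phi p ++ (if d then [:: false] else [::])) [::] w.

Lemma Pw_rcons w d : Pw (rcons w d) = phi (Pw w) ++ (if d then [:: false] else [::]).
Proof. by rewrite /Pw foldl_rcons. Qed.

Lemma Pw_cons d z : Pw (d :: z) = (if d then stdw (size z) else [::]) ++ Pw z.
Proof.
elim/last_ind: z => [|z e IH]; first by case: d.
rewrite -rcons_cons !Pw_rcons IH phi_cat catA size_rcons; case: d {IH} => //.
by rewrite phi_stdw.
Qed.

Lemma fibval_cons d z : fibval (d :: z) = d * fib (size z).+2 + fibval z.
Proof.
rewrite /fibval /= rev_cons big_ord_recr /= nth_rcons size_rev ltnn eqxx addnC.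
congr (_ + _); apply: eq_bigr => i _; rewrite nth_rcons size_rev ltn_ord //.
Qed.

Lemma size_Pw z : size (Pw z) = fibval z.
Proof.
elim: z => [|d z IH]; first by rewrite /fibval big_ord0.
rewrite Pw_cons fibval_cons size_cat IH; case: d => //=.
by rewrite size_stdw mul1n.
Qed.

Definition valid (z : word) : Prop :=
  forall i, i.+1 < size z -> ~~ (nth false z i && nth false z i.+1).

Lemma valid_cons d z : valid (d :: z) -> valid z /\ (d -> head false z = false).
Proof.
move=> h; split.
  by move=> i hi; apply: (h i.+1).
move=> hd; case: z h => [|e z] h //=; move: (h 0 isT); rewrite /= hd; by case: e {h}.
Qed.

Lemma Pw_prefix_aux n : forall z, size z = n -> valid z -> exists t, stdw (size z) = Pw z ++ t.
Proof.
elim/ltn_ind: n => n IH [|d z] hn hv.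
  by exists [:: false].
have [hv' hd] := valid_cons hv.
case: d hd {hv} hn => hd hn.
  case: z hn hv' hd => [|e z] hn hv' hd.
    by exists [:: true].
  have he : e = false by apply: hd.
  subst e.
  have [hv'' _] := valid_cons hv'.
  have hlt : size z < n by rewrite -hn /=; lia.
  have [t ht] := IH (size z) hlt z erefl hv''.
  exists t; rewrite (Pw_cons true) (Pw_cons false) cat0s.
  change (stdw (size z).+2 = (stdw (size z).+1 ++ Pw z) ++ t).
  by rewrite stdwSS ht catA.
have hlt : size z < n by rewrite -hn /=; lia.
have [t ht] := IH (size z) hlt z erefl hv'.
have [t' ht'] := stdw_prefix (leqnSn (size z)).
exists (t ++ t'); rewrite (Pw_cons false) cat0s.
change (stdw (size z).+1 = Pw z ++ t ++ t').
by rewrite ht' ht catA.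
Qed.

Lemma Pw_prefix z : valid z -> exists t, stdw (size z) = Pw z ++ t.
Proof. exact: Pw_prefix_aux. Qed.

Lemma fibprefix_Pw z : valid z -> fibprefix (fibval z) = Pw z.
Proof.
move=> hv; rewrite /fibprefix -size_Pw.
have [t ht] := Pw_prefix hv.
set N := size (Pw z).
have [t1 h1] := stdw_prefix (leq_maxl N (size z)).
have [t2 h2] := stdw_prefix (leq_maxr N (size z)).
have hN : N <= size (stdw N) by rewrite size_stdw; have := fib_ge N; lia.
have -> : take N (stdw N) = take N (stdw (maxn N (size z))).
  rewrite h1 take_cat; case: ltnP => h //; rewrite take_oversize //.
  have -> : N - size (stdw N) = 0 by lia.
  by rewrite take0 cats0.
rewrite h2 ht -catA take_cat ltnn subnn take0 cats0 //.
Qed.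


Lemma phi_flatten L : phi (flatten L) = flatten (map phi L).
Proof. by elim: L => [|x L IH] //=; rewrite phi_cat IH. Qed.

Lemma nseqSr T k (x : T) : nseq k.+1 x = rcons (nseq k x) x.
Proof. by rewrite -cats1 -[[:: x]]/(nseq 1 x) -nseqD addn1. Qed.

Lemma facword_nil : facword [::] = [::].
Proof. by []. Qed.

Lemma facword_cons k r : facword (k :: r) = phi (facword r) ++ nseq k false.
Proof.
rewrite /facword /= -[1]/(1 + 0) iotaDl rev_cons -cats1 flatten_cat /= cats0.
have -> : flatten (nseq k (stdw 0)) = nseq k false by elim: k => //= k ->.
congr (_ ++ _); rewrite phi_flatten map_rev -!map_comp; congr (flatten (rev _)).
apply: eq_map => i /=; rewrite phi_flatten map_nseq phi_stdw //.
Qed.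

Fixpoint hasbb (w : word) : bool :=
  if w is x :: r then (x && head false r) || hasbb r else false.

Lemma hasbb_cat u v :
  hasbb (u ++ v) = [|| hasbb u, hasbb v | last false u && head false v].
Proof.
elim: u => [|x u IH] /=; first by case: (hasbb v).
rewrite IH; case: u {IH} => [|y u] /=.
  by case: x; case: (hasbb v); case: (head false v).
by case: x; case: y; case: (hasbb u); case: (hasbb v); case: (last _ u && _).
Qed.

Lemma phi_nobb w : ~~ hasbb (phi w).
Proof.
elim: w => [|c w IH] //; rewrite phi_cons hasbb_cat (negbTE IH).
have := phi_head w; case: (head false (phi w)) => // _.
by case: c; rewrite /= ?andbF.
Qed.

Lemma nseq_nobb k : ~~ hasbb (nseq k false).
Proof. by elim: k => [|k IH] //=. Qed.

Lemma facword_nobb ks : ~~ hasbb (facword ks).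
Proof.
case: ks => [|k r] //; rewrite facword_cons hasbb_cat (negbTE (phi_nobb _)) (negbTE (nseq_nobb _)) /=.
by case: k => [|k] /=; rewrite andbF.
Qed.

Lemma facword_head ks : ~~ head false (facword ks).
Proof.
case: ks => [|k r] //; rewrite facword_cons.
have := phi_head (facword r); case: (phi (facword r)) => [|y s] //= _.
by case: k.
Qed.

Definition validks (ks : seq nat) : bool := (ks == [::]) || (last 0 ks != 0).
Definition isfacb (x : word) (ks : seq nat) : bool := validks ks && (facword ks == x).

Fixpoint allseq (n L : nat) : seq (seq nat) :=
  if n is n'.+1 then flatten [seq [seq i :: s | s <- allseq n' L] | i <- iota 0 L]
  else [:: [::]].

Lemma mem_allseq L s : all (fun i => i < L) s -> s \in allseq (size s) L.
Proof.
elim: s => [|i s IH] //= /andP [hi hs]; apply/flattenP.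
exists [seq i :: t | t <- allseq (size s) L].
  by apply/mapP; exists i => //; rewrite mem_iota.
by apply/mapP; exists s => //; apply: IH.
Qed.

Definition cands (x : word) : seq (seq nat) :=
  flatten [seq allseq n (size x).+1 | n <- iota 0 (size x).+2].

Definition facs (x : word) : seq (seq nat) := undup (filter (isfacb x) (cands x)).
Definition Fac (x : word) : nat := size (facs x).

Lemma size_facword_ge ks :
  all (fun k => k <= size (facword ks)) ks /\ (validks ks -> size ks <= size (facword ks)).
Proof.
elim: ks => [|k r [IH1 IH2]] //; rewrite facword_cons size_cat size_nseq size_phi.
split.
  rewrite /= leq_addl /=; apply: sub_all IH1 => i /=; lia.
rewrite /validks /=; case: r IH1 IH2 => [|y r] IH1 IH2 /=.
  by case: k.
move=> hl; have : validks (y :: r) by rewrite /validks /=.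
move=> /IH2 h.
have : 0 < count negb (facword (y :: r)).
  have := facword_head (y :: r).
  case E: (facword (y :: r)) => [|c s] /=; first by move: h; rewrite E.
  by move=> ->.
move: h => /=; lia.
Qed.

Lemma isfac_cands x ks : isfacb x ks -> ks \in cands x.
Proof.
move=> /andP [hv /eqP hx]; have [h1 h2] := size_facword_ge ks.
have h2' := h2 hv; rewrite hx in h1 h2'.
apply/flattenP; exists (allseq (size ks) (size x).+1).
  by apply/mapP; exists (size ks) => //; rewrite mem_iota /=; lia.
apply: mem_allseq; apply: sub_all h1 => i /=; lia.
Qed.

Lemma mem_facs x ks : (ks \in facs x) = isfacb x ks.
Proof.
rewrite /facs mem_undup mem_filter; case h: (isfacb x ks) => //=.
exact: isfac_cands.
Qed.

Lemma Fac_spec x s : uniq s -> (forall ks, (ks \in s) = isfacb x ks) -> size s = Fac x.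
Proof.
move=> hu hm; apply: perm_size; apply: uniq_perm => //; first exact: undup_uniq.
by move=> ks; rewrite hm mem_facs.
Qed.

Lemma Fac_nil : Fac [::] = 1.
Proof.
rewrite -(@Fac_spec [::] [:: [::]]) // => ks; rewrite inE.
case: ks => [|k r] //=; apply/esym/negbTE; apply/andP => [[hv /eqP he]].
have [_ h] := size_facword_ge (k :: r); have := h hv; rewrite he //.
Qed.

Lemma Fac_bb x : hasbb x -> Fac x = 0.
Proof.
move=> hb; rewrite -(@Fac_spec x [::]) // => ks; apply/esym/negbTE.
apply/andP => [[_ /eqP he]]; have := facword_nobb ks; by rewrite he hb.
Qed.

Lemma Fac_headb x : head false x -> Fac x = 0.
Proof.
move=> hb; rewrite -(@Fac_spec x [::]) // => ks; apply/esym/negbTE.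
apply/andP => [[_ /eqP he]]; have := facword_head ks; by rewrite he hb.
Qed.

Lemma Fac_cat_bb U y : hasbb y -> Fac (U ++ y) = 0.
Proof. by move=> h; apply: Fac_bb; rewrite hasbb_cat h orbT. Qed.


Definition incr (ks : seq nat) : seq nat :=
  if ks is k :: r then k.+1 :: r else [:: 1].

Lemma facword_incr ks : facword (incr ks) = rcons (facword ks) false.
Proof.
case: ks => [|k r] /=; first by rewrite facword_cons.
by rewrite !facword_cons nseqSr rcons_cat.
Qed.

Lemma validks_cons0 r : validks (0 :: r) -> validks r.
Proof. by rewrite /validks /=; case: r. Qed.

Lemma validks_cons0' r : r != [::] -> validks r -> validks (0 :: r).
Proof. by rewrite /validks /=; case: r. Qed.

Lemma validks_incr r : validks r -> validks (incr r).
Proof. by case: r => [|k [|y r]]. Qed.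

Lemma LA S : Fac (phi S ++ [:: false]) = Fac (S ++ [:: true]) + Fac (phi S).
Proof.
rewrite [Fac (S ++ _)]/Fac [Fac (phi S)]/Fac -(size_map (cons 0) (facs (S ++ [:: true]))) -(size_map incr (facs (phi S))) -size_cat.
symmetry; apply: Fac_spec.
  rewrite cat_uniq; apply/and3P; split.
  - by rewrite map_inj_uniq ?undup_uniq // => a b [].
  - apply/hasPn => y /mapP [x _ ->]; apply/mapP => [[z _]]; by case: x.
  - rewrite map_inj_in_uniq ?undup_uniq //.
    move=> x y hx hy; rewrite !mem_facs in hx hy.
    case: x hx => [|a r] hx; case: y hy => [|b t] hy //=.
    + by case=> hb ht; subst; move: hy; rewrite /isfacb /validks.
    + by case=> ha hr; subst; move: hx; rewrite /isfacb /validks.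
    + by case=> -> ->.
move=> ks; rewrite mem_cat; apply/idP/idP.
  case/orP => /mapP [r hr ->]; rewrite mem_facs in hr; move: hr => /andP [hv /eqP hf].
    have hr : r != [::] by apply/eqP => hr; move: hf; rewrite hr; case: S.
    rewrite /isfacb validks_cons0' //= facword_cons hf phi_cat cats0 //.
  apply/andP; split.
    exact: validks_incr.
  by rewrite facword_incr hf cats1.
case/andP => hv /eqP hf; case: ks hv hf => [|k r] hv hf.
  by move: hf; rewrite facword_nil; case: (phi S).
case: k hv hf => [|k] hv hf.
  apply/orP; left; apply/mapP; exists r => //; rewrite mem_facs /isfacb (validks_cons0 hv) /=.
  rewrite facword_cons /= cats0 in hf.
  apply/eqP; apply: phi_inj; rewrite hf phi_cat //.
apply/orP; right; apply/mapP.
exists (if (k == 0) && (r == [::]) then [::] else k :: r).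
  rewrite mem_facs /isfacb; apply/andP; split.
    case: k hv {hf} => [|k]; case: r => [|y r] //=; rewrite /validks //=.
  have h0 : rcons (facword (k :: r)) false = rcons (phi S) false.
    by rewrite -facword_incr -cats1; exact: hf.
  case: (rcons_inj h0) => h.
  by case: k {hv hf h0} h => [|k]; case: r => [|y r] //= <-.
by case: k {hv hf} => [|k]; case: r.
Qed.

Lemma LB S : Fac (phi S ++ [:: false; true]) = Fac (S ++ [:: false]).
Proof.
rewrite [Fac (S ++ _)]/Fac -(size_map (cons 0) (facs (S ++ [:: false]))).
symmetry; apply: Fac_spec.
  by rewrite map_inj_uniq ?undup_uniq // => a b [].
move=> ks; apply/idP/idP.
  move=> /mapP [r hr ->]; rewrite mem_facs in hr; move: hr => /andP [hv /eqP hf].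
  have hr : r != [::] by apply/eqP => hr; move: hf; rewrite hr; case: S.
  rewrite /isfacb validks_cons0' //= facword_cons hf phi_cat cats0 //.
case/andP => hv /eqP hf; case: ks hv hf => [|k r] hv hf.
  by move: hf; rewrite facword_nil; case: (phi S).
case: k hv hf => [|k] hv hf.
  apply/mapP; exists r => //; rewrite mem_facs /isfacb (validks_cons0 hv) /=.
  rewrite facword_cons /= cats0 in hf.
  apply/eqP; apply: phi_inj; rewrite hf phi_cat //.
exfalso.
have h0 : rcons (facword (k :: r)) false = rcons (phi S ++ [:: false]) true.
  by rewrite -facword_incr rcons_cat /=; exact: hf.
by case: (rcons_inj h0).
Qed.


Fixpoint decode (z : word) : option word :=
  match z with
  | [::] => Some [::]
  | true :: _ => None
  | false :: true :: r => omap (cons false) (decode r)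
  | false :: r => omap (cons true) (decode r)
  end.

Lemma decode_phi_aux n z z' : size z <= n -> decode z = Some z' -> phi z' = z.
Proof.
elim: n z z' => [|n IH] [|c z] z' //=.
- by move=> _ h; injection h as <-.
- by move=> _ h; injection h as <-.
case: c => //; case: z => [|c r] /=.
  by move=> _ h; injection h as <-.
case: c => /= hs.
  case E: (decode r) => [r'|] //= [<-]; rewrite phi_cons (IH r r') //; lia.
have -> : (match r with | true :: r0 => omap (cons false) (decode r0) | _ => omap (cons true) (decode r) end) = decode (false :: r) by [].
case E: (decode (false :: r)) => [r'|] //= [<-]; rewrite phi_cons (IH (false :: r) r') //.
Qed.

Lemma decode_phi z z' : decode z = Some z' -> phi z' = z.
Proof. exact: (@decode_phi_aux (size z)). Qed.

Fixpoint exR (ue : bool) (r : word) : option (seq word) :=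
  match r with
  | [::] => if ue then Some [:: [::]] else None
  | false :: _ => Some [:: rev r]
  | true :: r' => omap (cons (rev r)) (exR ue r')
  end.

Lemma exR_spec ue r U ys : exR ue r = Some ys -> (ue -> U = [::]) ->
  Fac (phi (U ++ rev r)) = \sum_(y <- ys) Fac (U ++ y).
Proof.
elim: r ys => [|c r IH] ys /=.
  case: ue => // [[<-]] /(_ isT) ->; by rewrite big_seq1.
case: c.
  case E: (exR ue r) => [ys'|] //= [<-] hU.
  rewrite big_cons -(IH ys' E hU) rev_cons -cats1 catA phi_cat /= LA.
  by rewrite -catA.
move=> [<-] _; rewrite big_seq1 rev_cons -cats1 catA phi_cat /= LB -catA //.
Qed.

Definition expand (ue : bool) (z : word) : option (seq word) :=
  if hasbb z then Some [::] else
  match z with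
  | true :: _ => if ue then Some [::] else None
  | _ => match decode z with Some z' => exR ue (rev z') | None => None end
  end.

Lemma expand_spec ue z U ys : expand ue z = Some ys -> (ue -> U = [::]) ->
  Fac (phi U ++ z) = \sum_(y <- ys) Fac (U ++ y).
Proof.
rewrite /expand; case hb: (hasbb z).
  by move=> [<-] _; rewrite big_nil Fac_cat_bb.
case: z hb => [|c z] hb.
  move=> /= hE hU; have := @exR_spec ue [::] U ys hE hU; by rewrite cats0 /= cats0.
case: c hb => hb.
  case: ue => // [[<-]] /(_ isT) ->; rewrite big_nil /=; exact: Fac_headb.
case E: (decode (false :: z)) => [z'|] // hE hU.
rewrite -(decode_phi E) -phi_cat -(exR_spec hE hU) revK //.
Qed.

Lemma expand_spec_filter ue z U ys : expand ue z = Some ys -> (ue -> U = [::]) ->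
  Fac (phi U ++ z) = \sum_(y <- [seq y <- ys | ~~ hasbb y]) Fac (U ++ y).
Proof.
move=> hE hU; rewrite (expand_spec hE hU) big_filter [RHS]big_mkcond /=.
apply: eq_bigr => y _; case: ifP => // /negbFE h; by rewrite Fac_cat_bb.
Qed.

Import GRing.Theory.
Local Open Scope ring_scope.


Definition sum8 (f : nat -> int) : int := foldr (fun j acc => f j + acc) 0 (iota 0 8).
Definition vsub (x y : seq int) : seq int := mkseq (fun k => nth 0 x k - nth 0 y k) 8.
Definition lin (c : seq int) (A : seq (seq int)) : seq int :=
  mkseq (fun k => sum8 (fun j => nth 0 c j * nth 0 (nth [::] A j) k)) 8.
Definition eq8 (x y : seq int) : bool := all (fun k => nth 0 x k == nth 0 y k) (iota 0 8).
Definition dotc (r v : seq int) : int := sum8 (fun k => nth 0 r k * nth 0 v k).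
Definition mvc (A : seq (seq int)) (v : seq int) : seq int := map (fun r => dotc r v) A.
Definition unitv (i : nat) : seq int := mkseq (fun k => (k == i)%:R) 8.
Definition vadd (x y : seq int) : seq int := mkseq (fun k => nth 0 x k + nth 0 y k) 8.
Definition zero8 : seq int := nseq 8 0.
Definition rowof (Ys : seq word) (ys : seq word) : seq int :=
  foldr (fun y acc => vadd (unitv (index y Ys)) acc) zero8 ys.

Definition g0l : seq (seq int) :=
  [:: [:: 0; 1; 0; 0; 0; 0; 0; 0];
      [:: 0; 0; 0; 1; 0; 0; 0; 0];
      [:: -1; 1; 0; 1; 0; 0; 0; 0];
      [:: 0; 0; 0; 0; 1; 0; 0; 0];
      [:: 0; 0; 0; 0; 0; 0; 1; 0];
      [:: -1; 0; 0; 2; 1; 0; 0; 0];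
      [:: 1; -1; 0; -3; 3; 0; 1; 0];
      [:: -1; -1; 0; 2; 3; 0; 1; 0]].
Definition g1l : seq (seq int) :=
  [:: [:: 0; 0; 1; 0; 0; 0; 0; 0];
      [:: 0; 0; 1; 0; 0; 0; 0; 0];
      [:: 0; 0; 0; 0; 0; 0; 0; 0];
      [:: 0; 0; 0; 0; 0; 1; 0; 0];
      [:: 0; 0; 0; 0; 0; 1; 0; 0];
      [:: 0; 0; 0; 0; 0; 0; 0; 0];
      [:: 0; 0; 0; 0; 0; 0; 0; 1];
      [:: 0; 0; 0; 0; 0; 0; 0; 0]].
Definition gl (d : bool) := if d then g1l else g0l.
Definition ul : seq int := [:: 1; 1; 1; 1; 1; 2; 1; 4].

Definition nst := 10%N.
Definition sigv : seq word := [:: [::]; [:: false]; [:: false; false; true]; [:: false; true]; [:: false; true; false]; [:: false; true; false]; [:: false; true; false]; [:: false; true; false; false]; [:: false; true; false; false]; [:: false; true; false; true]].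
Definition l1v : seq bool := [:: false; true; false; false; false; false; true; true; true; false].
Definition uev : seq bool := [:: true; true; false; true; false; true; false; false; true; false].
Definition Yv : seq (seq word) := [:: [:: [::]; [:: true]];
  [:: [::]; [:: false]; [:: true]];
  [:: [:: false]; [:: false; false]; [:: false; true]; [:: false; false; false]; [:: false; false; true]];
  [:: [::]; [:: false]; [:: true]; [:: false; false]; [:: false; true]];
  [:: [:: false]; [:: false; false]; [:: false; true]; [:: false; true; false]; [:: false; true; false; true]];
  [:: [:: false]; [:: false; false]; [:: false; true]; [:: false; true; false]; [:: false; true; false; true]];
  [:: [:: false]; [:: false; false]; [:: false; true]; [:: false; true; false]];
  [:: [:: false]; [:: false; true]; [:: false; true; false]; [:: false; true; false; false]; [:: false; true; false; true]];
  [:: [:: false]; [:: false; true]; [:: false; true; false]; [:: false; true; false; false]; [:: false; true; false; true]];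
  [:: [:: false]; [:: false; true]; [:: false; true; false]; [:: false; true; false; false]; [:: false; true; false; true]]].
Definition Kv : seq (seq (seq int)) := [:: [:: [:: 1; 0]; [:: 1; 0]; [:: 1; 1]; [:: 1; 0]; [:: 1; 0]; [:: 2; 1]; [:: 1; 0]; [:: 4; 1]];
  [:: [:: 0; 1; 0]; [:: 0; 1; 0]; [:: 0; 0; 0]; [:: 1; 1; 1]; [:: 1; 1; 1]; [:: 0; 0; 0]; [:: 3; 1; 2]; [:: 0; 0; 0]];
  [:: [:: 0; 0; 0; 0; 1]; [:: 0; 1; 0; 0; 1]; [:: 0; 1; 0; 0; 1]; [:: 0; 1; 0; 0; 1]; [:: 1; 2; 1; 0; 1]; [:: 0; 2; 0; 1; 2]; [:: 1; 2; 1; 0; 1]; [:: 1; 5; 1; 2; 4]];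
  [:: [:: 0; 0; 0; 0; 1]; [:: 0; 1; 0; 0; 1]; [:: 0; 1; 0; 0; 1]; [:: 0; 1; 0; 0; 1]; [:: 1; 2; 1; 0; 1]; [:: 0; 2; 0; 1; 2]; [:: 1; 2; 1; 0; 1]; [:: 1; 5; 1; 2; 4]];
  [:: [:: 0; 0; 0; 1; 0]; [:: 0; 0; 0; 1; 0]; [:: 0; 0; 0; 1; 1]; [:: 1; 0; 1; 1; 0]; [:: 1; 0; 1; 1; 0]; [:: 1; 0; 1; 2; 1]; [:: 3; 1; 3; 1; 0]; [:: 4; 0; 4; 4; 1]];
  [:: [:: 0; 0; 0; 1; 0]; [:: 0; 0; 0; 1; 0]; [:: 0; 0; 0; 1; 1]; [:: 1; 0; 1; 1; 0]; [:: 1; 0; 1; 1; 0]; [:: 1; 0; 1; 2; 1]; [:: 3; 1; 3; 1; 0]; [:: 4; 0; 4; 4; 1]];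
  [:: [:: 0; 0; 0; 1]; [:: 0; 0; 0; 1]; [:: 0; 0; 0; 0]; [:: 1; 0; 1; 1]; [:: 1; 0; 1; 1]; [:: 0; 0; 0; 0]; [:: 3; 1; 3; 1]; [:: 0; 0; 0; 0]];
  [:: [:: 0; 0; 0; 1; 0]; [:: 0; 0; 0; 1; 0]; [:: 0; 0; 0; 0; 0]; [:: 0; 0; 1; 1; 1]; [:: 0; 0; 1; 1; 1]; [:: 0; 0; 0; 0; 0]; [:: 1; 1; 3; 1; 2]; [:: 0; 0; 0; 0; 0]];
  [:: [:: 0; 0; 0; 1; 0]; [:: 0; 0; 0; 1; 0]; [:: 0; 0; 0; 0; 0]; [:: 0; 0; 1; 1; 1]; [:: 0; 0; 1; 1; 1]; [:: 0; 0; 0; 0; 0]; [:: 1; 1; 3; 1; 2]; [:: 0; 0; 0; 0; 0]];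
  [:: [:: 0; 0; 0; 0; 1]; [:: 0; 0; 1; 0; 1]; [:: 0; 0; 1; 0; 1]; [:: 0; 0; 1; 0; 1]; [:: 1; 1; 2; 0; 1]; [:: 0; 0; 2; 1; 2]; [:: 1; 1; 2; 0; 1]; [:: 1; 1; 5; 2; 4]]].
Definition Cv : seq (seq (seq int)) := [:: [:: [:: 0; 1]];
  [:: [:: -1; 1; 0]; [:: 0; 0; 1]];
  [:: [:: -1; 1; 0; 0; 0]; [:: -1; 0; 0; 1; 0]];
  [:: [:: -1; 1; 0; 0; 0]; [:: 0; 0; 1; 0; 0]; [:: -1; 0; 0; 1; 0]; [:: -1; 0; 0; 0; 1]];
  [:: [:: -1; 1; 0; 0; 0]; [:: 0; 0; -1; 0; 1]];
  [:: [:: -1; 1; 0; 0; 0]; [:: -1; 0; 1; 0; 0]; [:: -2; 0; 0; 1; 0]; [:: -1; 0; 0; 0; 1]];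
  [:: [:: -1; 1; 0; 0]];
  [:: [:: 0; 0; -1; 1; 0]; [:: 0; -1; 0; 0; 1]];
  [:: [:: -1; 1; 0; 0; 0]; [:: -2; 0; 1; 0; 0]; [:: -2; 0; 0; 1; 0]; [:: -1; 0; 0; 0; 1]];
  [:: [:: 0; 0; -1; 1; 0]; [:: 0; -1; 0; 0; 1]]].
Definition trv : seq (seq (nat * word * seq (seq int) * seq (seq int))) := [::
  [:: (0, [::], [:: [:: 0]; [:: 0]; [:: 0]; [:: 0]; [:: 0]; [:: 0]; [:: 0]; [:: 0]], [:: [:: 0]]); (1, [::], [:: [:: 0]; [:: 0]; [:: 0]; [:: 0]; [:: 0]; [:: 0]; [:: 0]; [:: 0]], [:: [:: 1]; [:: 0]])];
  [:: (3, [::], [:: [:: 0; 0]; [:: 0; 0]; [:: 0; 0]; [:: 0; 0]; [:: 0; 0]; [:: 0; 0]; [:: 0; 0]; [:: 0; 0]], [:: [:: 0; 1]; [:: 0; 0]; [:: 0; 1]; [:: 1; 0]]); (0, [::], [::], [::])];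
  [:: (4, [:: false], [:: [:: 0; 0]; [:: 0; 0]; [:: 1; -1]; [:: 0; 0]; [:: 0; 0]; [:: 1; -1]; [:: 0; 0]; [:: 1; -1]], [:: [:: 0; 0]; [:: -1; 1]]); (7, [:: false], [:: [:: 0; 0]; [:: 0; 0]; [:: 0; 0]; [:: 0; 0]; [:: 0; 0]; [:: 0; 0]; [:: 0; 0]; [:: 0; 0]], [:: [:: 0; 0]; [:: -1; 1]])];
  [:: (5, [::], [:: [:: 0; 0; 0; 0]; [:: 0; 0; 0; 0]; [:: 1; 0; -1; 0]; [:: 0; 0; 0; 0]; [:: 0; 0; 0; 0]; [:: 1; 0; -1; 0]; [:: 0; 0; 0; 0]; [:: 1; 0; -1; 0]], [:: [:: 0; 0; 0; 0]; [:: 1; -1; 0; 0]; [:: 1; -2; 0; 1]; [:: 0; -1; 1; 0]]); (8, [::], [:: [:: 0; 0; 0; 0]; [:: 0; 0; 0; 0]; [:: 0; 0; 0; 0]; [:: 0; 0; 0; 0]; [:: 0; 0; 0; 0]; [:: 0; 0; 0; 0]; [:: 0; 0; 0; 0]; [:: 0; 0; 0; 0]], [:: [:: 1; -1; 0; 0]; [:: 1; -2; 0; 1]; [:: 1; -2; 0; 1]; [:: 0; -1; 1; 0]])];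
  [:: (2, [:: false], [:: [:: 0; 0]; [:: 0; 0]; [:: 0; 0]; [:: 0; 0]; [:: 0; 0]; [:: 0; 0]; [:: 0; 0]; [:: 0; 0]], [:: [:: 0; 0]; [:: 0; 0]]); (6, [:: false; true], [:: [:: 0; 0]; [:: 0; 0]; [:: 0; 0]; [:: 0; 0]; [:: 0; 0]; [:: 0; 0]; [:: 0; 0]; [:: 0; 0]], [:: [:: 0; 0]])];
  [:: (2, [:: false], [:: [:: 0; 0; 0; 0]; [:: 0; 0; 0; 0]; [:: 0; 0; 0; 0]; [:: 0; 0; 0; 0]; [:: 0; 0; 0; 0]; [:: 0; 0; 0; 0]; [:: 0; 0; 0; 0]; [:: 0; 0; 0; 0]], [:: [:: 0; 0; 0; 0]; [:: 0; 0; 0; 0]]); (6, [:: false; true], [:: [:: 0; 0; 0; 0]; [:: 0; 0; 0; 0]; [:: 0; 0; 0; 0]; [:: 0; 0; 0; 0]; [:: 0; 0; 0; 0]; [:: 0; 0; 0; 0]; [:: 0; 0; 0; 0]; [:: 0; 0; 0; 0]], [:: [:: 0; 0; 0; 0]])];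
  [:: (2, [:: false], [:: [:: 0]; [:: 0]; [:: 0]; [:: 0]; [:: 0]; [:: 0]; [:: 0]; [:: 0]], [:: [:: 0]; [:: 0]]); (0, [::], [::], [::])];
  [:: (9, [:: false; true], [:: [:: 0; 0]; [:: 0; 0]; [:: 0; 0]; [:: 0; 0]; [:: 0; 0]; [:: 0; 0]; [:: 0; 0]; [:: 0; 0]], [:: [:: 0; 0]; [:: 1; 0]]); (0, [::], [::], [::])];
  [:: (9, [:: false; true], [:: [:: 0; 0; 0; 0]; [:: 0; 0; 0; 0]; [:: 0; 0; 0; 0]; [:: 0; 0; 0; 0]; [:: 0; 0; 0; 0]; [:: 0; 0; 0; 0]; [:: 0; 0; 0; 0]; [:: 0; 0; 0; 0]], [:: [:: 0; 0; 0; 0]; [:: 0; -1; 1; 0]]); (0, [::], [::], [::])];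
  [:: (4, [:: false; true], [:: [:: 0; 0]; [:: 0; 0]; [:: -1; 0]; [:: 0; 0]; [:: 0; 0]; [:: -1; 0]; [:: 0; 0]; [:: -1; 0]], [:: [:: 0; 0]; [:: 1; 0]]); (7, [:: false; true], [:: [:: 0; 0]; [:: 0; 0]; [:: 0; 0]; [:: 0; 0]; [:: 0; 0]; [:: 0; 0]; [:: 0; 0]; [:: 0; 0]], [:: [:: 0; 0]; [:: 1; 0]])]].

Definition sig (s : nat) : word := nth [::] sigv s.
Definition l1 (s : nat) : bool := nth false l1v s.
Definition ue (s : nat) : bool := nth false uev s.
Definition Y (s : nat) : seq word := nth [::] Yv s.
Definition K (s : nat) : seq (seq int) := nth [::] Kv s.
Definition C (s : nat) : seq (seq int) := nth [::] Cv s.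
Definition tr (s : nat) (d : bool) : nat * word * seq (seq int) * seq (seq int) :=
  nth (0%N, [::], [::], [::]) (nth [::] trv s) (nat_of_bool d).
Definition trt s d := (tr s d).1.1.1.
Definition trs1 s d := (tr s d).1.1.2.
Definition trL s d := (tr s d).1.2.
Definition trL' s d := (tr s d).2.

Definition nobb (y : word) : bool := ~~ hasbb y.
Definition exps (s : nat) (d : bool) : seq (seq word) :=
  [seq [seq y <- odflt [::] (expand (ue s) (phi (trs1 s d) ++ y')) | nobb y] | y' <- Y (trt s d)].
Definition Mx (s : nat) (d : bool) : seq (seq int) :=
  [seq rowof (Y s) ys | ys <- exps s d].

Definition check_tr (s : nat) (d : bool) : bool :=
  let t := trt s d in let s1 := trs1 s d in
  [&& (t < nst)%N,
      take (size s1) (sig s) == s1,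
      sig t == phi (drop (size s1) (sig s)) ++ (if d then [:: false] else [::]),
      l1 t == d,
      ue t == ue s && (s1 == [::]),
      all (fun y' => if expand (ue s) (phi s1 ++ y') is Some ys then
                        all (fun y => y \in Y s) [seq y <- ys | nobb y] else false) (Y t),
      all (fun i => eq8 (vsub (lin (nth [::] (gl d) i) (K s)) (lin (nth [::] (K t) i) (Mx s d)))
                        (lin (nth [::] (trL s d) i) (C s))) (iota 0 8) &
      all (fun j => eq8 (lin (nth [::] (C t) j) (Mx s d)) (lin (nth [::] (trL' s d) j) (C s)))
          (iota 0 (size (C t)))].

Definition check_st (s : nat) : bool :=
  [&& uniq (Y s), (size (Y s) <= 8)%N, sig s \in Y s, size (K s) == 8%N,
      eq8 (nth [::] (K s) 0) (unitv (index (sig s) (Y s))),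
      check_tr s false & (l1 s || check_tr s true)].

Definition check_all : bool :=
  [&& all check_st (iota 0 nst), sig 0 == [::], ue 0, ~~ l1 0, Y 0 == [:: [::]; [:: true]],
      mvc (K 0) [:: 1; 0] == ul &
      all (fun j => dotc (nth [::] (C 0) j) [:: 1; 0] == 0) (iota 0 (size (C 0)))].

Lemma check_all_ok : check_all.
Proof. vm_compute. reflexivity. Qed.


Definition dot (r v : seq int) : int := \sum_(k < 8) nth 0 r k * nth 0 v k.
Definition mv (A : seq (seq int)) (v : seq int) : seq int := map (fun r => dot r v) A.

Lemma foldr_big (f : nat -> int) l : foldr (fun j acc => f j + acc) 0 l = \sum_(j <- l) f j.
Proof. by elim: l => [|x l IH] /=; rewrite ?big_nil ?big_cons ?IH. Qed.

Lemma sum8E f : sum8 f = \sum_(j < 8) f j.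
Proof. by rewrite /sum8 foldr_big -(big_mkord xpredT). Qed.

Lemma dotcE r v : dotc r v = dot r v.
Proof. by rewrite /dotc sum8E. Qed.

Lemma dot_nil v : dot [::] v = 0.
Proof. by apply: big1 => k _; rewrite nth_nil mul0r. Qed.

Lemma dot_ext x y v : (forall k, (k < 8)%N -> nth 0 x k = nth 0 y k) -> dot x v = dot y v.
Proof. by move=> h; apply: eq_bigr => k _; rewrite h. Qed.

Lemma dot_vsub x y v : dot (vsub x y) v = dot x v - dot y v.
Proof. by rewrite /dot -sumrB; apply: eq_bigr => k _; rewrite nth_mkseq // mulrBl. Qed.

Lemma dot_vadd x y v : dot (vadd x y) v = dot x v + dot y v.
Proof. by rewrite /dot -big_split; apply: eq_bigr => k _; rewrite nth_mkseq // mulrDl. Qed.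

Lemma dot_zero8 v : dot zero8 v = 0.
Proof. by apply: big1 => k _; rewrite nth_nseq; case: ifP; rewrite mul0r. Qed.

Lemma dot_eq8 x y v : eq8 x y -> dot x v = dot y v.
Proof.
move=> /allP h; apply: dot_ext => k hk; apply/eqP; apply: h; rewrite mem_iota; lia.
Qed.

Lemma nth_mv A v j : nth 0 (mv A v) j = dot (nth [::] A j) v.
Proof.
case: (ltnP j (size A)) => h; first by rewrite (nth_map [::]).
by rewrite !nth_default ?size_map // dot_nil.
Qed.

Lemma dot_lin c A v : dot c (mv A v) = dot (lin c A) v.
Proof.
rewrite /dot; under eq_bigr do rewrite nth_mv /dot mulr_sumr.
rewrite exchange_big; apply: eq_bigr => m _ /=.
rewrite nth_mkseq // sum8E mulr_suml; apply: eq_bigr => j _; by rewrite mulrA.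
Qed.

Lemma dot_unitv i v : (i < 8)%N -> dot (unitv i) v = nth 0 v i.
Proof.
move=> hi; rewrite /dot (bigD1 (Ordinal hi)) //= nth_mkseq // eqxx mul1r big1 ?addr0 //.
move=> k hk; rewrite nth_mkseq //.
have /negbTE -> : (k : nat) != i.
  by apply: contra hk => /eqP h; apply/eqP/val_inj.
by rewrite mul0r.
Qed.

Lemma dot_lin_zero c A v : (forall j, dot (nth [::] A j) v = 0) -> dot (lin c A) v = 0.
Proof.
move=> h; rewrite -dot_lin; apply: big1 => k _; by rewrite nth_mv h mulr0.
Qed.

Lemma dot_rowof (Ys ys : seq word) (g : word -> int) :
  (size Ys <= 8)%N -> all (fun y => y \in Ys) ys ->
  dot (rowof Ys ys) [seq g y | y <- Ys] = \sum_(y <- ys) g y.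
Proof.
move=> hs; elim: ys => [|y ys IH] /=; first by rewrite big_nil dot_zero8.
move=> /andP [hy hys]; rewrite dot_vadd IH // big_cons; congr (_ + _).
have hi : (index y Ys < size Ys)%N by rewrite index_mem.
rewrite dot_unitv; last by apply: leq_trans hs.
by rewrite (nth_map [::]) // nth_index.
Qed.


Lemma check_st_of s : (s < nst)%N -> check_st s.
Proof.
move=> hs; have := check_all_ok; case/and5P => /allP h _ _ _ _; apply: h.
by rewrite mem_iota.
Qed.

Lemma check_tr_of s (d : bool) : (s < nst)%N -> (d -> ~~ l1 s) -> check_tr s d.
Proof.
move=> hs hd; have := check_st_of hs; case/and5P => _ _ _ _ /and3P [_ h0 h1].
by case: d hd h1 => // /(_ isT) /negbTE ->.
Qed.

Definition stw (w : word) : nat := foldl (fun s d => trt s d) 0%N w.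
Definition Sv (s : nat) (U : word) : seq int := [seq (Fac (U ++ y))%:Z | y <- Y s].
Definition Hl (w : word) : seq int := foldl (fun h d => mv (gl d) h) ul w.

Lemma valid_rcons w d : valid (rcons w d) -> valid w /\ (d -> ~~ last false w).
Proof.
move=> h; split.
  move=> i hi; have := h i; rewrite size_rcons !nth_rcons hi (ltnW hi); apply; lia.
move=> hd; case: w h => [|x w] h //.
have := h (size w); rewrite size_rcons /= ltnSn => /(_ isT).
rewrite -rcons_cons nth_rcons /= ltnSn nth_rcons /= ltnn eqxx hd andbT.
by rewrite (last_nth false).
Qed.

Lemma Sv_step s (d : bool) U y' ys : (size (Y s) <= 8)%N ->
  expand (ue s) (phi (trs1 s d) ++ y') = Some ys -> (ue s -> U = [::]) ->
  all (fun y => y \in Y s) [seq y <- ys | nobb y] ->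
  (Fac (phi (U ++ trs1 s d) ++ y'))%:Z = dot (rowof (Y s) [seq y <- ys | nobb y]) (Sv s U).
Proof.
move=> hs hE hU hall; rewrite dot_rowof //.
rewrite phi_cat -catA (expand_spec_filter hE hU).
by rewrite -(big_morph Posz PoszD (erefl 0%:Z)).
Qed.

Lemma Sv_trans s (d : bool) (U : word) :
  (s < nst)%N -> (d -> ~~ l1 s) -> (ue s -> U = [::]) ->
  Sv (trt s d) (phi (U ++ trs1 s d)) = mv (Mx s d) (Sv s U).
Proof.
move=> hs hd hU; have hst := check_st_of hs; have htr := check_tr_of hs hd.
case/and5P: hst => _ hsz _ _ _.
case/and5P: htr => _ _ _ _ /and4P [_ hexp _ _].
rewrite /Sv /mv /Mx /exps -!map_comp; apply/eq_in_map => y' hy' /=.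
move/allP: hexp => /(_ y' hy').
case E: (expand (ue s) (phi (trs1 s d) ++ y')) => [ys|] // hall.
exact: Sv_step.
Qed.

Lemma inv_main w : valid w ->
  [/\ (stw w < nst)%N, l1 (stw w) = last false w &
   exists U, [/\ Pw w = U ++ sig (stw w), (ue (stw w) -> U = [::]),
     Hl w = mv (K (stw w)) (Sv (stw w) U) &
     forall j, dot (nth [::] (C (stw w)) j) (Sv (stw w) U) = 0]].
Proof.
elim/last_ind: w => [|w d IH] hv.
  have := check_all_ok; case/and5P => _ /eqP hsig hue hl1 /and3P [/eqP hY /eqP hK /allP hC].
  have -> : stw [::] = 0%N by [].
  split => //.
  have hSv : Sv 0 [::] = [:: 1; 0].
    by rewrite /Sv hY /= Fac_nil Fac_headb.
  exists [::]; split.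
  - by rewrite hsig.
  - by [].
  - by rewrite /Hl hSv -hK /mvc /mv; apply: eq_map => r; rewrite dotcE.
  move=> j; rewrite hSv.
  case: (ltnP j (size (C 0))) => hj.
    by rewrite -dotcE; apply/eqP; apply: hC; rewrite mem_iota.
  by rewrite nth_default // dot_nil.
have [hvw hlast] := valid_rcons hv.
have [hs hl [U [hP hU hH hCz]]] := IH hvw.
set s := stw w in hs hl hP hU hH hCz.
have hd : d -> ~~ l1 s by rewrite hl.
have hst := check_st_of hs; have htr := check_tr_of hs hd.
have hstw : stw (rcons w d) = trt s d by rewrite /stw foldl_rcons.
rewrite hstw.
case/and5P: htr => ht /eqP htake /eqP hsigt /eqP hl1t /and4P [/eqP huet _ /allP hH8 /allP hC8].
split => //.
  by rewrite hl1t last_rcons.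
exists (phi (U ++ trs1 s d)); split.
- rewrite Pw_rcons hP hsigt -[in LHS](cat_take_drop (size (trs1 s d)) (sig s)) htake.
  by rewrite !phi_cat !catA.
- by rewrite huet => /andP [/hU -> /eqP ->].
- have hsv := Sv_trans hs hd hU.
  case/and5P: hst => _ _ _ _ /and3P [_ _ _].
  have : size (K (trt s d)) = 8%N.
    by have := check_st_of ht; case/and5P => _ _ _ /eqP -> _.
  move=> hK8; rewrite /Hl foldl_rcons -/(Hl w) hH hsv.
  have hg : size (gl d) = 8%N by rewrite /gl; case: ifP.
  apply: (@eq_from_nth _ 0); first by rewrite !size_map hK8 hg.
  move=> i; rewrite size_map hg => hi8.
  rewrite !nth_mv dot_lin dot_lin.
  apply/eqP; rewrite -subr_eq0; apply/eqP; rewrite -dot_vsub.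
  rewrite (dot_eq8 _ (hH8 i _)); last by rewrite mem_iota.
  exact: dot_lin_zero.
- move=> j; rewrite (Sv_trans hs hd hU).
  case: (ltnP j (size (C (trt s d)))) => hj.
    rewrite dot_lin (dot_eq8 _ (hC8 j _)); last by rewrite mem_iota.
    exact: dot_lin_zero.
  by rewrite nth_default // dot_nil.
Qed.


Definition colv (v : seq int) : 'cV[int]_8 := \col_(i < 8) nth 0 v i.

Lemma mx_of_mul G v : mx_of G *m colv v = colv (mv G v).
Proof.
apply/matrixP => i j; rewrite !mxE nth_mv /dot; apply: eq_bigr => k _; by rewrite !mxE.
Qed.

Lemma gamma_letter_gl d : gamma_letter d = mx_of (gl d).
Proof. by case: d. Qed.

Lemma gamma_col w : gamma (rev w) *m uvec = colv (Hl w).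
Proof.
elim/last_ind: w => [|w d IH]; first by rewrite /= mul1mx.
rewrite rev_rcons /= -mulmxA IH gamma_letter_gl mx_of_mul /Hl foldl_rcons //.
Qed.

Lemma final_val z : valid z ->
  (tvec *m gamma (rev z) *m uvec) 0 0 = (Fac (Pw z))%:Z.
Proof.
move=> hv; rewrite -mulmxA gamma_col.
have -> : (tvec *m colv (Hl z)) 0 0 = nth 0 (Hl z) 0.
  rewrite !mxE !big_ord_recl big_ord0 !mxE /=.
  by rewrite !mul0r !addr0 mul1r.
have [hs _ [U [hP hU hH _]]] := inv_main hv.
set s := stw z in hs hP hU hH.
have := check_st_of hs; case/and5P => _ hsz hmem _ /and3P [heq _ _].
rewrite hH nth_mv (dot_eq8 _ heq) dot_unitv; last first.
  by apply: leq_trans hsz; rewrite index_mem.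
rewrite /Sv (nth_map [::]) ?index_mem // nth_index // hP //.
Qed.

Theorem theorem2 (n : nat) (z : seq bool) :
  canonical_fib_rep n z ->
  exists v : nat, V_is n v /\ (tvec *m gamma (rev z) *m uvec) 0 0 = v%:Z.
Proof.
case=> _ hv hn; exists (Fac (Pw z)); split; last exact: final_val.
exists (facs (fibprefix n)); split => //; first exact: undup_uniq.
  move=> ks; rewrite mem_facs /isfacb /is_factorization /validks.
  split.
    by case/andP => /orP [/eqP ->|/eqP h] /eqP ->; split => //; [left|right].
  case=> [[->|/eqP h] ->]; apply/andP; split => //; by rewrite ?h ?orbT.
by rewrite -hn fibprefix_Pw.
Qed.
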